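(* Let $n$ be a positive odd integer. Then $$ \sum_{k=0}^{n-1}\frac{(aq;q^2)_k\,(q/a;q^2)_k}{(q^2;q^2)_k^2} \equiv (-1)^{(n-1)/2}q^{(1-n^2)/4}\pmod{(1-aq^n)(a-q^n)}. $$
   Context: $a,q$ are indeterminates. The $q$-shifted factorial is $(y;q)_0=1$ and $(y;q)_m=(1-y)(1-yq)\cdots(1-yq^{m-1})$ for $m\geqslant1$. For rational functions $A,B$ and a polynomial $P$, $A\equiv B\pmod P$ means $A-B=P\cdot C/D$ for polynomials $C,D$ with $D$ coprime to $P$. *)

(* Defs.v *)
From HB Require Import structures.
From mathcomp Require Import all_boot all_order all_algebra.
Set Implicit Arguments. Unset Strict Implicit. Unset Printing Implicit Defensive.
Import Order.TTheory GRing.Theory Num.Theory.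
Local Open Scope ring_scope.

(* Bivariate polynomial ring Q[a,q], represented as {poly {poly rat}}:
   outer variable = a, inner variable = q. *)
Definition Rpol := {poly {poly rat}}.
Definition Rfrac := {fraction {poly {poly rat}}}.

Definition embF (x : Rpol) : Rfrac := @FracField.tofrac _ x.

Definition var_a : Rpol := 'X.
Definition var_q : Rpol := ('X)%:P.
Definition fa : Rfrac := embF var_a.
Definition fq : Rfrac := embF var_q.

Definition qpoch (y p : Rfrac) (m : nat) : Rfrac :=
  \prod_(i < m) (1 - y * p ^+ i).

Definition pdivides (g P : Rpol) : Prop := exists h : Rpol, P = g * h.
Definition pcoprime (P D : Rpol) : Prop :=
  forall g : Rpol, pdivides g P -> pdivides g D -> g \is a GRing.unit.

Definition congr_mod (A B : Rfrac) (P : Rpol) : Prop :=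
  exists C D : Rpol, D != 0 /\ pcoprime P D /\
    A - B = embF P * embF C / embF D.

(* Main.v *)
Require Import Defs.
From HB Require Import structures.
From mathcomp Require Import all_boot all_order all_algebra.
From mathcomp Require Import ring zify lra.
Set Implicit Arguments. Unset Strict Implicit. Unset Printing Implicit Defensive.
Import Order.TTheory GRing.Theory Num.Theory.
Local Open Scope ring_scope.
Section CV.
Variable F : fieldType.
Definition qp (y p : F) (m : nat) : F := \prod_(i < m) (1 - y * p ^+ i).

Lemma qp_recr y p k : qp y p k.+1 = qp y p k * (1 - y * p ^+ k).
Proof. by rewrite /qp big_ord_recr. Qed.
Lemma qp_recl y p k : qp y p k.+1 = (1 - y) * qp (y * p) p k.
Proof.
rewrite /qp big_ord_recl expr0 mulr1; congr (_ * _).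
by apply: eq_bigr => i _; rewrite /= exprS mulrA.
Qed.
Lemma qp0 y p : qp y p 0 = 1.
Proof. by rewrite /qp big_ord0. Qed.

Variable p : F.
Hypothesis p0 : p != 0.
Hypothesis hp : forall j, (0 < j)%N -> 1 - p ^+ j != 0.

Definition tt m k := qp (p ^+ m.+1) p k * qp (p ^+ m)^-1 p k / (qp p p k) ^+ 2.
Definition HH m k := if k is k'.+1 then
  qp (p ^+ m.+1) p k * qp (p ^+ m)^-1 p k' / (qp p p k') ^+ 2 else 0.

Lemma Q0 k : qp p p k != 0.
Proof.
rewrite /qp prodf_seq_neq0; apply/allP => i _ /=.
by rewrite -exprS hp.
Qed.

Lemma local_id m k :
  tt m.+1 k * (- p ^+ m.+1) - tt m k =
  - (1 + p ^+ m.+1) / (1 - p ^+ m.+1) * (HH m k.+1 - HH m k).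
Proof.
have X0 : p ^+ m != 0 by rewrite expf_neq0.
have pX : 1 - p ^+ m.+1 != 0 by rewrite hp.
case: k => [|k].
  rewrite /tt /HH !qp0 qp_recr qp0 expr0 !mulr1 expr1n !divr1 !mul1r subr0.
  by field.
rewrite /tt /HH.
have Q := Q0 k.
have pY : 1 - p ^+ k.+1 != 0 by rewrite hp.
have E1 : qp (p ^+ m.+2) p k.+1 = qp (p ^+ m.+1) p k * (1 - p ^+ m.+1 * p ^+ k) * (1 - p ^+ m.+1 * p ^+ k.+1) / (1 - p ^+ m.+1).
  by rewrite -!qp_recr (qp_recl (p ^+ m.+1)) -exprSr; field.
have E2 : qp (p ^+ m.+1)^-1 p k.+1 = (1 - (p ^+ m.+1)^-1) * qp (p ^+ m)^-1 p k.
  by rewrite qp_recl exprS invfM mulrAC mulVf // mul1r.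
rewrite E1 E2 !qp_recr.
set A := qp (p ^+ m.+1) p k; set B := qp (p ^+ m)^-1 p k.
rewrite !exprS.
field.
by rewrite -!exprS Q pX pY X0 p0.
Qed.

Lemma qp_vanish m k : (m < k)%N -> qp (p ^+ m)^-1 p k = 0.
Proof.
move=> /subnKC <-; elim: (k - m.+1)%N => [|j IH].
  by rewrite addn0 qp_recr mulVf ?subrr ?mulr0 // expf_neq0.
by rewrite addnS qp_recr IH mul0r.
Qed.

Definition rr m := \prod_(i < m) (- (p ^+ i.+1)^-1).

Lemma sum_tt m K : (m < K)%N -> \sum_(k < K) tt m k = rr m.
Proof.
elim: m K => [|m IH] K mK.
  case: K mK => // K _.
  rewrite big_ord_recl /tt !qp0 expr1n divr1 mulr1 /rr big_ord0.
  rewrite big1 ?addr0 // => i _.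
  by rewrite (qp_vanish (m := 0)) // mulr0 mul0r.
have X0 : p ^+ m.+1 != 0 by rewrite expf_neq0.
have pX : 1 - p ^+ m.+1 != 0 by rewrite hp.
have H1 : \sum_(k < K) (tt m.+1 k * (- p ^+ m.+1) - tt m k) = 0.
  rewrite (eq_bigr (fun k : 'I_K => - (1 + p ^+ m.+1) / (1 - p ^+ m.+1) * (HH m (k : nat).+1 - HH m k))); last by move=> k _; rewrite local_id.
  rewrite -mulr_sumr -(big_mkord xpredT (fun k => HH m k.+1 - HH m k)) telescope_sumr // /HH.
  case: K mK => // K mK.
  by rewrite (qp_vanish (m := m) (k := K)) // mulr0 mul0r subr0 mulr0.
rewrite sumrB -mulr_suml IH ?(ltnW mK) // in H1.
move/eqP: H1; rewrite subr_eq0 => /eqP H1.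
rewrite /rr big_ord_recr /= -/(rr m) -H1.
by field.
Qed.
End CV.
Lemma mono_div (R : idomainType) (m : nat) : forall (g h : {poly R}) (c : R),
  c != 0 -> g * h = c%:P * 'X^m -> exists l d, g = d%:P * 'X^l.
Proof.
elim: m => [|m IH] g h c c0 E.
  have g0 : g != 0 by apply: contraNneq c0 => g0; move: E; rewrite g0 mul0r expr0 mulr1 => /esym /eqP; rewrite polyC_eq0.
  have h0 : h != 0 by apply: contraNneq c0 => h0; move: E; rewrite h0 mulr0 expr0 mulr1 => /esym /eqP; rewrite polyC_eq0.
  have := size_mul g0 h0; rewrite E expr0 mulr1 size_polyC c0 => S.
  exists 0%N, g`_0; rewrite expr0 mulr1; apply: size1_polyC.
  have : (0 < size h)%N by rewrite size_poly_gt0.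
  lia.
have : g`_0 * h`_0 = 0 by rewrite -coef0M E coefCM exprSr coefMX /= mulr0.
move/eqP; rewrite mulf_eq0 => /orP [] /eqP z.
  have : root g 0 by rewrite /root horner_coef0 z.
  case/factor_theorem => g' Eg; rewrite subr0 in Eg.
  have : (g' * h) * 'X = (c%:P * 'X^m) * 'X.
    by rewrite -mulrA (mulrC h) mulrA -Eg E exprSr mulrA.
  move/(mulIf (negbT (polyX_eq0 R))) => /(IH _ _ _ c0) [l [d Eg2]].
  by exists l.+1, d; rewrite Eg Eg2 exprSr mulrA.
have : root h 0 by rewrite /root horner_coef0 z.
case/factor_theorem => h' Eh; rewrite subr0 in Eh.
have : (g * h') * 'X = (c%:P * 'X^m) * 'X.
  by rewrite -mulrA -Eh E exprSr mulrA.
by move/(mulIf (negbT (polyX_eq0 R))) => /(IH _ _ _ c0).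
Qed.

Lemma P_expand (n : nat) :
  (1 - var_a * var_q ^+ n) * (var_a - var_q ^+ n) =
  (- 'X^n)%:P + (1 + 'X^n * 'X^n)%:P * 'X + (- 'X^n)%:P * 'X ^+ 2 :> Rpol.
Proof.
rewrite /var_a /var_q polyCN polyCD polyC1 polyCM -!rmorphXn /=; ring.
Qed.

Lemma P_coef0 (n : nat) :
  ((1 - var_a * var_q ^+ n) * (var_a - var_q ^+ n))`_0 = - 'X^n.
Proof. by rewrite P_expand !coefD coefC coefMX coefMXn /= addr0 addr0. Qed.

Lemma P_coef1 (n : nat) :
  ((1 - var_a * var_q ^+ n) * (var_a - var_q ^+ n))`_1 = 1 + 'X^n * 'X^n.
Proof. by rewrite P_expand !coefD coefC coefMX coefMXn /= coefC /= add0r addr0. Qed.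

Lemma coprimeP (n : nat) (n0 : (0 < n)%N) (j : nat) (c : {poly rat}) :
  c != 0 -> pcoprime ((1 - var_a * var_q ^+ n) * (var_a - var_q ^+ n)) ('X^j * c%:P).
Proof.
move=> c0 g [h2 Eh2] [h1 Eh1].
have Xn0 : ('X^n : {poly rat}) != 0 by rewrite monic_neq0 ?monicXn.
have Eh1' : g * h1 = c%:P * 'X^j by rewrite -Eh1 mulrC.
have [l [d Eg]] := mono_div c0 Eh1'.
have l0 : l = 0%N.
  case: l Eg => // l Eg; exfalso.
  have := P_coef0 n; rewrite Eh2 coef0M Eg coefCM coefXn /= mulr0 mul0r => /eqP.
  by rewrite eq_sym oppr_eq0 (negbTE Xn0).
move: Eg; rewrite l0 expr0 mulr1 => Eg.
have E0 := P_coef0 n; rewrite Eh2 Eg coefCM in E0.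
have E1 := P_coef1 n; rewrite Eh2 Eg coefCM in E1.
have m1 : (-1 : rat) != 0 by rewrite oppr_eq0 oner_eq0.
have E0' : d * h2`_0 = (-1)%:P * 'X^n by rewrite E0 polyCN polyC1 mulN1r.
have [l' [e Ed]] := mono_div m1 E0'.
have l'0 : l' = 0%N.
  case: l' Ed => // l' Ed; exfalso.
  have := congr1 (fun p : {poly rat} => p`_0) E1.
  rewrite /= coef0M Ed coefCM coefXn /= mulr0 mul0r coefD coef0M coefXn.
  have -> : (0 == n)%N = false by case: n n0 {Eh2 E0 E1 E0' Xn0}.
  rewrite mulr0 coefC /= addr0 => /eqP.
  by rewrite eq_sym oner_eq0.
move: Ed; rewrite l'0 expr0 mulr1 => Ed.
have e0 : e != 0.
  apply: contraNneq Xn0 => e0; move: E0; rewrite Ed e0 mul0r => /eqP.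
  by rewrite eq_sym oppr_eq0.
rewrite Eg Ed poly_unitE size_polyC polyC_eq0 e0 /= coefC /= poly_unitE size_polyC e0 /= coefC /= unitfE e0.
done.
Qed.

Lemma embF_rmorph_prod (I : finType) (f : I -> Rpol) :
  embF (\prod_i f i) = \prod_i embF (f i).
Proof. by rewrite /embF rmorph_prod. Qed.
Lemma embFM x y : embF (x * y) = embF x * embF y.
Proof. by rewrite /embF rmorphM. Qed.
Lemma embFB x y : embF (x - y) = embF x - embF y.
Proof. by rewrite /embF rmorphB. Qed.
Lemma embF1 : embF 1 = 1.
Proof. by rewrite /embF rmorph1. Qed.
Lemma embFX x k : embF (x ^+ k) = embF x ^+ k.
Proof. by rewrite /embF rmorphXn. Qed.
Lemma embF_eq0 x : (embF x == 0) = (x == 0).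
Proof. by rewrite /embF tofrac_eq0. Qed.

Lemma one_sub_Xn_neq0 j : (0 < j)%N -> (1 - 'X^j : {poly rat}) != 0.
Proof.
move=> j0; apply/eqP => /(congr1 (fun p : {poly rat} => p`_0)).
rewrite coefB coef1 coefXn /=.
have -> : (0 == j)%N = false by case: j j0.
by rewrite subr0 coef0 => /eqP; rewrite oner_eq0.
Qed.

Lemma fa_neq0 : fa != 0.
Proof. by rewrite /fa embF_eq0 /var_a polyX_eq0. Qed.
Lemma fq_neq0 : fq != 0.
Proof. by rewrite /fq embF_eq0 /var_q polyC_eq0 polyX_eq0. Qed.
Lemma fq_sub_neq0 j : (0 < j)%N -> 1 - fq ^+ j != 0.
Proof.
move=> j0; rewrite /fq -embFX -embF1 -embFB embF_eq0 /var_q -rmorphXn -polyC1 -polyCB polyC_eq0.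
exact: one_sub_Xn_neq0.
Qed.

Lemma prod_cong (R : comNzRingType) (P : R) (k : nat) (u w : nat -> R) :
  (forall i, exists c, u i - w i = P * c) ->
  exists C, \prod_(i < k) u i - \prod_(i < k) w i = P * C.
Proof.
move=> H; elim: k => [|k [C IH]].
  by exists 0; rewrite !big_ord0 subrr mulr0.
have [c Hc] := H k.
exists (C * u k + (\prod_(i < k) w i) * c).
rewrite !big_ord_recr /=.
have -> : \prod_(i < k) u i = P * C + \prod_(i < k) w i by rewrite -IH subrK.
have -> : u k = P * c + w k by rewrite -Hc subrK.
ring.
Qed.

Lemma gen_u (F : fieldType) (a q x N : F) : a != 0 ->
  N * (1 - a * q * x) * (a - q * x) = a * N * ((1 - a * q * x) * (1 - q / a * x)).
Proof. by move=> a0; field. Qed.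

Lemma gen_w (F : fieldType) (a q x Y : F) : Y != 0 ->
  a * (1 - (q * Y) * q * x) * (q * Y - q * x) =
  a * (q * Y) * ((1 - q ^+ 2 * Y * x) * (1 - Y^-1 * x)).
Proof. by move=> Y0; field. Qed.

Definition uu n i : Rpol := var_q ^+ n * (1 - var_a * var_q * (var_q ^+ 2) ^+ i) *
   (var_a - var_q * (var_q ^+ 2) ^+ i).
Definition ww n i : Rpol := var_a * (1 - var_q ^+ n * var_q * (var_q ^+ 2) ^+ i) *
   (var_q ^+ n - var_q * (var_q ^+ 2) ^+ i).

Lemma uu_ww n i : uu n i - ww n i =
  ((1 - var_a * var_q ^+ n) * (var_a - var_q ^+ n)) * (var_q * (var_q ^+ 2) ^+ i).
Proof. rewrite /uu /ww; ring. Qed.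

Lemma embF_uu n i : embF (uu n i) =
  fa * fq ^+ n * ((1 - fa * fq * (fq ^+ 2) ^+ i) * (1 - fq / fa * (fq ^+ 2) ^+ i)).
Proof.
rewrite /uu !embFM !embFB !embFM embF1 !embFX -/fa -/fq.
by rewrite gen_u // fa_neq0.
Qed.

Lemma embF_ww m i : embF (ww m.*2.+1 i) =
  fa * fq ^+ m.*2.+1 * ((1 - (fq ^+ 2) ^+ m.+1 * (fq ^+ 2) ^+ i) *
                        (1 - ((fq ^+ 2) ^+ m)^-1 * (fq ^+ 2) ^+ i)).
Proof.
rewrite /ww !embFM !embFB !embFM embF1 !embFX -/fa -/fq.
have -> : fq ^+ m.*2.+1 = fq * (fq ^+ 2) ^+ m by rewrite exprS -exprM mul2n.
rewrite gen_w ?expf_neq0 ?fq_neq0 //.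
by rewrite [(fq ^+ 2) ^+ m.+1]exprS.
Qed.

Lemma p_sub_neq0 j : (0 < j)%N -> 1 - (fq ^+ 2) ^+ j != 0.
Proof. by move=> j0; rewrite -exprM fq_sub_neq0 // muln_gt0. Qed.
Lemma p_neq0 : fq ^+ 2 != 0.
Proof. by rewrite expf_neq0 // fq_neq0. Qed.

Definition Qp k : Rpol := \prod_(i < k) (1 - var_q ^+ 2 * (var_q ^+ 2) ^+ i).
Definition den n k : Rpol := (var_a * var_q ^+ n) ^+ k * (Qp k) ^+ 2.
Definition PP n : Rpol := (1 - var_a * var_q ^+ n) * (var_a - var_q ^+ n).

Lemma embF_Qp k : embF (Qp k) = qpoch (fq ^+ 2) (fq ^+ 2) k.
Proof.
rewrite /Qp embF_rmorph_prod /qpoch; apply: eq_bigr => i _.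
by rewrite embFB embF1 embFM !embFX.
Qed.

Lemma gen_fin (F : fieldType) (c Q L E Z : F) : c != 0 -> Q != 0 ->
  Z = c * L - c * E -> L / Q ^+ 2 - E / Q ^+ 2 = Z / (c * Q ^+ 2).
Proof. move=> c0 Q0 ->; field. by rewrite c0 Q0. Qed.

Lemma prod_split (k : nat) (c : Rfrac) (f g : nat -> Rfrac) :
  \prod_(i < k) (c * (f i * g i)) = c ^+ k * (\prod_(i < k) f i * \prod_(i < k) g i).
Proof. by rewrite big_split big_split /= prodr_const card_ord. Qed.

Lemma term m k :
  exists C, qpoch (fa * fq) (fq ^+ 2) k * qpoch (fq / fa) (fq ^+ 2) k /
      (qpoch (fq ^+ 2) (fq ^+ 2) k) ^+ 2 - tt (fq ^+ 2) m k =
    embF (PP m.*2.+1) * (embF C / embF (den m.*2.+1 k)).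
Proof.
set n := m.*2.+1.
have [C HC] := @prod_cong _ (PP n) k (uu n) (ww n) (fun i => ex_intro _ _ (uu_ww n i)).
exists C.
rewrite mulrA -embFM -HC embFB !embF_rmorph_prod.
rewrite (eq_bigr _ (fun (i : 'I_k) _ => embF_uu n i)) (eq_bigr _ (fun (i : 'I_k) _ => embF_ww m i)).
rewrite (prod_split k (fa * fq ^+ n) (fun i => 1 - fa * fq * (fq ^+ 2) ^+ i) (fun i => 1 - fq / fa * (fq ^+ 2) ^+ i)).
rewrite (prod_split k (fa * fq ^+ n) (fun i => 1 - (fq ^+ 2) ^+ m.+1 * (fq ^+ 2) ^+ i) (fun i => 1 - ((fq ^+ 2) ^+ m)^-1 * (fq ^+ 2) ^+ i)).
rewrite /den !embFM !embFX embF_Qp !embFM !embFX -/fa -/fq.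
rewrite /tt; apply: gen_fin.
- by rewrite expf_neq0 // mulf_neq0 ?fa_neq0 // expf_neq0 // fq_neq0.
- exact: (Q0 p_sub_neq0).
- done.
Qed.

Definition mono (D : Rpol) := exists j (c : {poly rat}), c != 0 /\ D = 'X^j * c%:P.

Lemma mono_mul x y : mono x -> mono y -> mono (x * y).
Proof.
move=> [j [c [c0 ->]]] [l [d [d0 ->]]]; exists (j + l)%N, (c * d); split.
  by rewrite mulf_neq0.
by rewrite polyCM exprD; ring.
Qed.
Lemma mono_C c : c != 0 -> mono c%:P.
Proof. by move=> c0; exists 0%N, c; rewrite expr0 mul1r. Qed.
Lemma mono_X : mono var_a.
Proof. by exists 1%N, 1; rewrite oner_eq0 expr1 mulr1. Qed.
Lemma mono_1 : mono 1.
Proof. by rewrite -polyC1; apply: mono_C; rewrite oner_eq0. Qed.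
Lemma mono_exp x k : mono x -> mono (x ^+ k).
Proof. move=> h; elim: k => [|k IH]; first by rewrite expr0; exact: mono_1. by rewrite exprS; apply: mono_mul. Qed.
Lemma mono_prod k (f : nat -> Rpol) : (forall i, mono (f i)) -> mono (\prod_(i < k) f i).
Proof.
move=> h; elim: k => [|k IH]; first by rewrite big_ord0; exact: mono_1.
by rewrite big_ord_recr; apply: mono_mul.
Qed.
Lemma mono_neq0 x : mono x -> x != 0.
Proof.
move=> [j [c [c0 ->]]]; rewrite mulf_neq0 ?polyC_eq0 //.
by rewrite monic_neq0 // monicXn.
Qed.

Lemma mono_den n k : mono (den n k).
Proof.
rewrite /den; apply: mono_mul; apply: mono_exp.
  apply: mono_mul; first exact: mono_X.
  rewrite /var_q -rmorphXn; apply: mono_C.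
  by rewrite monic_neq0 // monicXn.
rewrite /Qp; apply: (@mono_prod k (fun i => 1 - var_q ^+ 2 * (var_q ^+ 2) ^+ i)) => i.
have -> : 1 - var_q ^+ 2 * (var_q ^+ 2) ^+ i = (1 - 'X ^+ (2 * i.+1))%:P.
  by rewrite polyCB polyC1 /var_q -!rmorphXn -rmorphM -exprS -exprM.
by apply: mono_C; apply: one_sub_Xn_neq0; rewrite muln_gt0.
Qed.
Lemma mono_prod_den n N : mono (\prod_(k < N) den n k).
Proof. by apply: mono_prod => k; apply: mono_den. Qed.

Lemma sum_comb m N :
  exists C, \sum_(k < N) (qpoch (fa * fq) (fq ^+ 2) k * qpoch (fq / fa) (fq ^+ 2) k /
      (qpoch (fq ^+ 2) (fq ^+ 2) k) ^+ 2 - tt (fq ^+ 2) m k) =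
    embF (PP m.*2.+1) * (embF C / embF (\prod_(k < N) den m.*2.+1 k)).
Proof.
elim: N => [|N [C IH]].
  by exists 0; rewrite !big_ord0 /embF rmorph0 mul0r mulr0.
have [C' HC'] := term m N.
exists (C * den m.*2.+1 N + C' * \prod_(k < N) den m.*2.+1 k).
rewrite big_ord_recr /= IH HC' -mulrDr big_ord_recr /=.
rewrite addf_div ?embF_eq0 ?mono_neq0 //; last 2 first.
- exact: mono_prod_den.
- exact: mono_den.
by rewrite /embF rmorphD !rmorphM.
Qed.

Lemma exp_arith m : (((m.*2.+1) ^ 2).-1 %/ 4 = m * m.+1)%N.
Proof.
have -> : ((m.*2.+1) ^ 2).-1 = (4 * (m * m.+1))%N.
  rewrite -mul2n; set t := (2 * m)%N; rewrite /t; lia.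
by rewrite mulKn.
Qed.

Lemma rr_eval m : rr (fq ^+ 2) m = (-1) ^+ m * (fq ^+ (m * m.+1))^-1.
Proof.
elim: m => [|m IH]; first by rewrite /rr big_ord0 expr0 mul1r mul0n expr0 invr1.
rewrite /rr big_ord_recr /= -/(rr _ m) IH.
have -> : fq ^+ (m.+1 * m.+2) = fq ^+ (m * m.+1) * (fq ^+ 2) ^+ m.+1.
  by rewrite -exprM -exprD; congr (_ ^+ _); lia.
rewrite invfM [(-1) ^+ m.+1]exprS.
set a := (fq ^+ (m * m.+1))^-1; set b := ((fq ^+ 2) ^+ m.+1)^-1; set e := (-1) ^+ m.
ring.
Qed.

Theorem theorem1p7 (n : nat) (hn : odd n) :
  congr_mod
    (\sum_(k < n)
        (qpoch (fa * fq) (fq ^+ 2) k * qpoch (fq / fa) (fq ^+ 2) k)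
          / (qpoch (fq ^+ 2) (fq ^+ 2) k) ^+ 2)
    ((-1) ^+ n.-1./2 * (fq ^+ ((n ^ 2).-1 %/ 4))^-1)
    ((1 - var_a * var_q ^+ n) * (var_a - var_q ^+ n)).
Proof.
have En : n = (n./2).*2.+1 by rewrite -{1}(odd_double_half n) hn add1n.
move: (n./2) En => m ->.
rewrite exp_arith /= doubleK -rr_eval.
rewrite -(@sum_tt _ (fq ^+ 2) p_neq0 p_sub_neq0 m m.*2.+1); last by rewrite ltnS -addnn leq_addr.
have [C HC] := sum_comb m m.*2.+1.
have [j [c [c0 ED]]] := mono_prod_den m.*2.+1 m.*2.+1.
exists C, (\prod_(k < m.*2.+1) den m.*2.+1 k); split.
  by apply: mono_neq0; apply: mono_prod_den.
split.
  by rewrite ED; apply: coprimeP.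
by rewrite -sumrB HC mulrA.
Qed.
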